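(* Let $H$ be a graph on $h$ vertices with $\chi(H)=r\geq 3$ and $\gcd(H)=1$. For every $\alpha>0$ there exists $n_0=n_0(\alpha,H)$ such that if $G$ is a balanced $r$-partite graph on $rn$ vertices with $n\geq n_0$ and $\delta^*(G)\geq \frac{r-2}{r-1}n+\alpha n$, then for every vertex $v\in V(G)$ there is a copy of $H$ in $G$ containing $v$.
   Context: For an $r$-partite graph $G$ with vertex classes $V_1,\dots,V_r$, $G$ is balanced if all classes have the same size, and $\delta^*(G)$ is the largest integer $m$ such that for all $i\neq j$ every vertex of $V_i$ has at least $m$ neighbours in $V_j$. For a graph $H$ with $\chi(H)=r$, let $\mathcal C$ be the set of proper $r$-colourings of $H$ with colour classes $X_1^\phi,\dots,X_r^\phi$, and $\mathcal D(H)=\bigcup_{\phi\in\mathcal C}\{|X_i^\phi|-|X_j^\phi|: i,j\in[r]\}$; $\gcd(H)$ is the greatest common divisor of the elements of $\mathcal D(H)$ (and $\infty$ if $\mathcal D(H)=\{0\}$). *)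

(* Defs.v *)
From mathcomp Require Import all_boot.
From Stdlib Require Import Reals.
Set Implicit Arguments. Unset Strict Implicit. Unset Printing Implicit Defensive.

Definition simple_graph (T : finType) (e : rel T) : Prop :=
  (forall x y, e x y = e y x) /\ (forall x, e x x = false).

Definition proper_colouring (T : finType) (e : rel T) (k : nat)
  (c : T -> 'I_k) : Prop := forall x y, e x y -> c x != c y.

Definition colourable (T : finType) (e : rel T) (k : nat) : Prop :=
  exists c : T -> 'I_k, proper_colouring e c.

Definition chromatic_number_is (T : finType) (e : rel T) (r : nat) : Prop :=
  colourable e r /\ ~ colourable e r.-1.

Definition colour_class (T : finType) (k : nat) (c : T -> 'I_k) (i : 'I_k)
  : {set T} := [set x | c x == i].

(* gcd(H) = 1 : the only natural number d dividing every element
   |X_i^phi| - |X_j^phi| of D(H) (phi a proper chi(H)-colouring) is d = 1.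
   (If D(H) = {0}, every d divides, so the condition fails, matching gcd = infinity.) *)
Definition gcd_is_one (T : finType) (e : rel T) (r : nat) : Prop :=
  forall d : nat,
    (forall (c : T -> 'I_r), proper_colouring e c ->
       forall i j : 'I_r,
         (d %| (#|colour_class c i| - #|colour_class c j|)) &&
         (d %| (#|colour_class c j| - #|colour_class c i|))) ->
    d = 1.

Definition balanced_rpartite (r n : nat) (eG : rel ('I_r * 'I_n)) : Prop :=
  simple_graph eG /\ (forall i a b, eG (i, a) (i, b) = false).

Definition copy_containing (T U : finType) (e : rel T) (eG : rel U) (v : U)
  : Prop :=
  exists f : T -> U, injective f /\ (forall x y, e x y -> eG (f x) (f y))
                     /\ (exists x, f x = v).

(* Main.v *)
Require Import Defs.
From mathcomp Require Import all_boot.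
From mathcomp Require Import fingroup perm.
From mathcomp Require Import zify.
Set Implicit Arguments. Unset Strict Implicit. Unset Printing Implicit Defensive.


Lemma card_cons (V : finType) k (P : pred (seq V)) :
  #|[set u : k.+1.-tuple V | P u]| =
  \sum_(t : k.-tuple V) #|[set y : V | P (y :: t)]|.
Proof.
rewrite -sum1_card.
pose h (p : V * k.-tuple V) : k.+1.-tuple V := [tuple of p.1 :: p.2].
pose h' (u : k.+1.-tuple V) : V * k.-tuple V := (thead u, [tuple of behead u]).
rewrite (reindex h); last first.
  exists h' => [[a s] _|u _]; rewrite /h /h' /=.
    by congr (_, _); apply: val_inj.
  by case/tupleP: u => a s; apply: val_inj.
transitivity (\sum_(y : V) \sum_(t : k.-tuple V) (if P (y::t) then 1 else 0)).
  by rewrite pair_big big_mkcond /=; apply: eq_bigr => -[y t] _; rewrite inE.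
rewrite exchange_big /=; apply: eq_bigr => t _.
rewrite -sum1_card [RHS]big_mkcond /=; apply: eq_bigr => y _.
by rewrite !inE.
Qed.
Lemma pigeon (U : finType) (P : pred U) (F : U -> nat) M :
  0 < #|P| -> M <= \sum_(u | P u) F u -> exists2 u, P u & M <= F u * #|P|.
Proof.
move=> cP HM; case: (posnP M) => [->|Mp].
  by case/card_gt0P: cP => u Pu; exists u.
case: (boolP [exists u, P u && (M <= F u * #|P|)]).
  by case/existsP => u /andP[]; exists u.
move=> /existsPn Hn.
have : \sum_(u | P u) F u * #|P| <= \sum_(u | P u) M.-1.
  apply: leq_sum => u Pu; move: (Hn u); rewrite negb_and => /orP[/negP //|].
  by rewrite -ltnNge; lia.
rewrite -big_distrl /= sum_nat_const.
have := leq_mul HM (leqnn #|P|).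
move: cP. rewrite -[#|[pred x | P x]|]/(#|P|).
set c := #|P|. move=> cP h1 h2. nia.
Qed.

Lemma ffact_ge a h : (a - h) ^ h <= a ^_ h.
Proof.
elim: h a => [|h IH] [|a] //=; first by rewrite exp0n.
rewrite ffactSS expnS subSS.
by apply: leq_mul; [lia | exact: IH].
Qed.

Lemma ffact_le a h : a ^_ h <= a ^ h.
Proof.
elim: h a => [|h IH] [|a] //=.
rewrite ffactSS expnS; apply: leq_mul => //.
apply: leq_trans (IH a) _; case: h {IH} => [|h]; first by rewrite !expn0.
by rewrite leq_exp2r.
Qed.

Lemma bin_ratio n a h c : n <= (a - h) * c -> 'C(n, h) <= 'C(a, h) * c ^ h.
Proof.
move=> H; rewrite -(leq_pmul2r (fact_gt0 h)) bin_ffact.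
rewrite mulnAC bin_ffact.
apply: leq_trans (ffact_le _ _) _.
apply: leq_trans (_ : ((a - h) * c) ^ h <= _).
  case: h H => [|h] H; first by rewrite !expn0.
  by rewrite leq_exp2r.
by rewrite expnMn leq_mul2r ffact_ge orbT.
Qed.

Lemma HK k : forall h D, exists N, forall (V : finType), N <= #|V| ->
  forall E : pred (seq V),
  #|V| ^ k <= #|[set u : k.-tuple V | E u]| * D ->
  exists Ss : seq {set V}, [/\ size Ss = k, all (fun S : {set V} => h <= #|S|) Ss &
    forall u : seq V, all2 (fun (x : V) (S : {set V}) => x \in S) u Ss -> E u].
Proof.
elim: k => [|k IH] h D.
  exists 1 => V HV E HE.
  have : 0 < #|[set u : 0.-tuple V | E u]|.
    by move: HE; rewrite expn0; case: #|_| => //; rewrite mul0n.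
  case/card_gt0P => u0; rewrite inE => Eu0.
  exists [::]; split => // -[|//] _.
  by move: Eu0; rewrite [u0]tuple0.
pose c4 := (4 * D) ^ h.
have [N' HN'] := IH h (c4 * (2 * D)).
exists (N' + 4 * D * h.+1 + 1) => V HV E HE.
set n := #|V| in HV HE *.
have np : 0 < n by lia.
have Dp : 0 < D.
  case: (posnP D) => // D0; move: HE; rewrite D0 muln0 leqn0 expn_eq0; lia.
pose A (t : k.-tuple V) := [set y | E (y :: t)].
have HE2 : n ^ k.+1 <= (\sum_t #|A t|) * D by rewrite -card_cons.
pose G := [set t : k.-tuple V | n <= #|A t| * (2 * D)].
have sumG : \sum_(t : k.-tuple V) ((t \in G) : nat) = #|G|.
  by rewrite -sum1_card [RHS]big_mkcond; apply: eq_bigr => t _; case: (t \in G).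
have cardT : #|{: k.-tuple V}| = n ^ k by rewrite card_tuple.
have claim1 : n ^ k <= #|G| * (2 * D).
  have : (\sum_t #|A t|) * (2 * D) <= \sum_(t : k.-tuple V) (((t \in G) : nat) * (n * (2 * D)) + n).
    rewrite big_distrl /=; apply: leq_sum => t _.
    case: (boolP (t \in G)) => tG /=.
      rewrite mul1n; apply: leq_trans (leq_addr _ _).
      by rewrite leq_mul2r max_card orbT.
    by move: tG; rewrite inE -ltnNge mul0n add0n => /ltnW.
  rewrite big_split /= -big_distrl /= sumG sum_nat_const cardT => H1.
  move: HE2 H1; rewrite expnS; set X := n ^ k; set Sm := \sum_t _ => HE2 H1.
  have : n * X <= n * (#|G| * (2 * D)) by nia.
  by rewrite leq_pmul2l.
pose a := n %/ (2 * D).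
have aG : forall t, t \in G -> a <= #|A t|.
  move=> t; rewrite inE => Ht.
  by rewrite -(leq_pmul2r (_ : 0 < 2 * D)) ?(leq_trans (leq_divM _ _) Ht) //; lia.
pose X (S : {set V}) := #|[set t | (t \in G) && (S \subset A t)]|.
have dc : \sum_(S : {set V} | #|S| == h) X S = \sum_(t in G) 'C(#|A t|, h).
  transitivity (\sum_(S : {set V}) \sum_(t : k.-tuple V)
      (if [&& #|S| == h, t \in G & S \subset A t] then 1 else 0)).
    rewrite big_mkcond; apply: eq_bigr => S _ /=; case: eqP => _ /=; last by rewrite big1.
    by rewrite /X -sum1_card big_mkcond; apply: eq_bigr => t _; rewrite inE.
  rewrite exchange_big [RHS]big_mkcond; apply: eq_bigr => t _ /=.
  case: (boolP (t \in G)) => tG /=; last by rewrite big1 // => S _; rewrite andbF.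
  rewrite -cards_draws -sum1_card [RHS]big_mkcond; apply: eq_bigr => S _.
  by rewrite inE andbC.
have lb : #|G| * 'C(a, h) <= \sum_(S : {set V} | #|S| == h) X S.
  rewrite dc -sum_nat_const; apply: leq_sum => t tG.
  exact: leq_bin2l (aG t tG).
have cardP : #|[pred S : {set V} | #|S| == h]| = 'C(n, h).
  by rewrite -card_draws; apply: eq_card => S; rewrite inE.
have Cnp : 0 < 'C(n, h) by rewrite bin_gt0; nia.
have [S /= /eqP Sh HS] := @pigeon _ [pred S : {set V} | #|S| == h] X _
   ltac:(by rewrite cardP) lb.
move: HS; rewrite cardP => HS.
have ratio : 'C(n, h) <= 'C(a, h) * (4 * D) ^ h.
  apply: bin_ratio.
  have := divn_eq n (2 * D); have := ltn_pmod n (_ : 0 < 2 * D).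
  rewrite -/a; move=> /(_ ltac:(lia)) h1 h2; nia.
have GX : #|G| <= X S * c4.
  rewrite -(leq_pmul2r Cnp); apply: leq_trans (_ : X S * 'C(n, h) * c4 <= _); last by rewrite mulnAC.
  apply: leq_trans (_ : #|G| * 'C(a, h) * c4 <= _); last by rewrite leq_mul2r HS orbT.
  by rewrite -mulnA leq_mul2l ratio orbT.
pose E' (u : seq V) := [forall y in S, E (y :: u)].
have XE : X S <= #|[set u : k.-tuple V | E' u]|.
  apply: subset_leq_card; apply/subsetP => t; rewrite !inE => /andP[_ /subsetP sS].
  by apply/forall_inP => y /sS; rewrite inE.
have HNV : N' <= n by lia.
have HX : n ^ k <= #|[set u : k.-tuple V | E' u]| * (c4 * (2 * D)).
  apply: leq_trans claim1 _; apply: leq_trans (_ : X S * c4 * (2 * D) <= _).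
    by rewrite leq_mul2r GX orbT.
  by rewrite [in X in _ <= X]mulnA; apply: leq_mul => //; apply: leq_mul.
have [Ss [sz allS box]] := HN' V HNV E' HX.
exists (S :: Ss); split => /=; first by rewrite sz.
  by rewrite allS Sh leqnn.
case => [//|y u] /= /andP[yS /box /forall_inP]; exact.
Qed.

Lemma count_nested (V : finType) (Q : pred (seq V)) m k :
  Q [::] -> (forall s, Q s -> size s < k -> m <= #|[set y | Q (y :: s)]|) ->
  m ^ k <= #|[set u : k.-tuple V | Q u]|.
Proof.
move=> Q0; elim: k => [|k IH] H.
  rewrite expn0 card_gt0; apply/set0Pn; exists [tuple]; by rewrite inE.
rewrite card_cons expnS mulnC.
apply: leq_trans (_ : #|[set u : k.-tuple V | Q u]| * m <= _).
  by rewrite leq_mul2r IH ?orbT // => s Qs lt; apply: H => //; apply: ltnW.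
rewrite -sum1_card big_distrl /= big_mkcond /=; apply: leq_sum => t _.
rewrite inE; case: (boolP (Q t)) => Qt //; rewrite mul1n.
by apply: H => //; rewrite size_tuple.
Qed.

Lemma union_bound (r n : nat) (eG : rel ('I_r * 'I_n)) (k : 'I_r)
  (L : seq ('I_r * 'I_n)) :
  n <= #|[set b | all (fun x => eG x (k, b)) L]| +
       \sum_(x <- L) #|[set b | ~~ eG x (k, b)]|.
Proof.
elim: L => [|x L IH].
  by rewrite big_nil addn0 (_ : [set b | _] = setT) ?cardsT ?card_ord //; apply/setP => b; rewrite !inE.
rewrite big_cons.
set A := [set b | all _ L] in IH.
set B := [set b | eG x (k, b)].
have -> : [set b | all (fun x0 => eG x0 (k, b)) (x :: L)] = A :&: B.
  by apply/setP => b; rewrite !inE andbC.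
have h1 := cardsID B A.
have h2 : #|A :\: B| <= #|[set b | ~~ eG x (k, b)]|.
  by apply: subset_leq_card; apply/subsetP => b; rewrite !inE => /andP[].
lia.
Qed.

Lemma sum_bound r n K (eG : rel ('I_r * 'I_n)) k (L : seq ('I_r * 'I_n)) :
  (forall x, x \in L ->
     K * (r - 1) * #|[set b | ~~ eG x (k, b)]| + (r - 1) * n <= K * n) ->
  K * (r - 1) * \sum_(x <- L) #|[set b | ~~ eG x (k, b)]| + size L * (r - 1) * n
    <= size L * K * n.
Proof.
elim: L => [|x L IH] H; first by rewrite big_nil /=; lia.
rewrite big_cons /=.
have h1 := H x (mem_head _ _).
have h2 := IH (fun y yL => H y (ltac:(by rewrite in_cons yL orbT))).
move: h1 h2; rewrite mulnDr; move: (r - 1) => q; set s := \sum_(j <- L) _; set d := #|[set b | ~~ eG x (k, b)]|; move: s d (size L) => s d l. move=> h1 h2; rewrite !mulSn; lia.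
Qed.

Lemma common_bound r n K (eG : rel ('I_r * 'I_n)) k (L : seq ('I_r * 'I_n)) :
  0 < r - 1 -> size L <= r - 1 ->
  (forall x, x \in L ->
     K * (r - 1) * #|[set b | ~~ eG x (k, b)]| + (r - 1) * n <= K * n) ->
  size L * n <= K * #|[set b | all (fun x => eG x (k, b)) L]|.
Proof.
move=> q0 sL H.
have h1 := sum_bound H; have h2 := union_bound eG k L.
move: h1 h2; set s := \sum_(_ <- _) _; set C := #|_|; set q := r - 1; set l := size L.
move=> h1 h2.
have h3 : q * (l * n) <= q * (K * C).
  have : K * q * n <= K * q * C + K * q * s by rewrite -mulnDr leq_mul2l h2 orbT.
  have : l * K * n <= q * K * n by rewrite !leq_mul2r sL !orbT.
  nia.
by rewrite leq_pmul2l in h3.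
Qed.

Lemma all2_nth (A B : Type) (P : A -> B -> bool) a0 b0 (s : seq A) (t : seq B) :
  size s = size t -> (forall i, i < size s -> P (nth a0 s i) (nth b0 t i)) ->
  all2 P s t.
Proof.
elim: s t => [|x s IH] [|y t] //= [st] H.
rewrite (H 0 erefl) /=; apply: IH => // i lti; exact: (H i.+1).
Qed.

Lemma all2_nthE (A B : Type) (P : A -> B -> bool) a0 b0 (s : seq A) (t : seq B) :
  all2 P s t -> size s = size t /\
  (forall i, i < size s -> P (nth a0 s i) (nth b0 t i)).
Proof.
elim: s t => [|x s IH] [|y t] //= /andP[Pxy /IH [st H]]; split; first by rewrite st.
by case=> [|i] //= lti; apply: H.
Qed.

Lemma card_tuple_eq (V : finType) k k' (P : pred (seq V)) : k = k' ->
  #|[set u : k.-tuple V | P u]| = #|[set u : k'.-tuple V | P u]|.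
Proof. by move=> ->. Qed.

Lemma card_pair_img (r n : nat) (k : 'I_r) (A : {set 'I_n}) :
  #|[set ((k, b) : 'I_r * 'I_n) | b in A]| = #|A|.
Proof. by apply: card_imset => b1 b2 []. Qed.

Lemma main_comb (T : finType) (e : rel T) (r K : nat) (x0 : T) :
  colourable e r -> 3 <= r -> 0 < K ->
  exists n0, forall n (eG : rel ('I_r * 'I_n)), n0 <= n -> balanced_rpartite eG ->
    (forall i j a, i != j ->
       K * (r - 1) * #|[set b | ~~ eG (i, a) (j, b)]| + (r - 1) * n <= K * n) ->
    forall v, copy_containing e eG v.
Proof.
move=> [c cP] r3 K0.
pose h := #|T|.
pose D := (2 * K * r) ^ r.
have [N0 HN0] := HK r h D.
exists (N0 + 2 * K) => n eG Hn [[sym irr] nocl] Hdeg v.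
pose V := ('I_r * 'I_n)%type.
have cardV : #|{: V}| = r * n by rewrite card_prod !card_ord.
pose Q (s : seq V) := pairwise eG s && all (eG v) s.
pose E (s : seq V) := [&& head v s != v, pairwise eG s & all (eG v) (behead s)].
pose m := n %/ K.
have mK : m * K <= n by apply: leq_divM.
have nm : n <= m * (2 * K).
  have := divn_eq n K; have := ltn_pmod n K0; rewrite -/m; nia.
have degL : forall (k : 'I_r) (L : seq V), (forall x, x \in L -> x.1 != k) ->
    forall x, x \in L ->
     K * (r - 1) * #|[set b | ~~ eG x (k, b)]| + (r - 1) * n <= K * n.
  by move=> k L HL [i a] xL; apply: Hdeg; exact: (HL _ xL).
have extQ : forall s, Q s -> size s < r - 1 -> m <= #|[set y | Q (y :: s)]|.
  move=> s Qs ss.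
  pose L := v :: s.
  have [k kL] : exists k : 'I_r, k \notin map fst L.
    case: (boolP [exists k : 'I_r, k \notin map fst L]) => [/existsP//|/existsPn H].
    have : #|{: 'I_r}| <= size (map fst L).
      apply: leq_trans (card_size _).
      by apply: subset_leq_card; apply/subsetP => k _; move: (H k); rewrite negbK.
    have e1 : size (map fst L) = (size s).+1 by rewrite size_map.
    rewrite card_ord e1 => hh; exfalso; lia.
  have HL : forall x, x \in L -> x.1 != k.
    by move=> x xL; apply/eqP => ex; move: kL; rewrite -ex map_f.
  have r1 : 0 < r - 1 by lia.
  have sL : size L <= r - 1 := ss.
  have HA := common_bound r1 sL (degL k L HL).
  have mA : m <= #|[set b | all (fun x => eG x (k, b)) L]|.
    rewrite -(leq_pmul2r K0); apply: leq_trans mK _; move: HA; rewrite /= mulnC; nia.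
  apply: leq_trans mA _; rewrite -(card_pair_img k); apply: subset_leq_card.
  apply/subsetP => y /imsetP [b bA ->]; move: bA; rewrite /L /= !inE; case/andP => vb Hb.
  rewrite /Q /= vb; move: Qs => /andP [-> ->]; rewrite !andbT.
  by apply/allP => x xs; rewrite sym; move/allP: Hb; apply.
have extE : forall t : seq V, Q t -> size t = r - 1 -> m <= #|[set y | E (y :: t)]|.
  move=> t Qt st.
  have HL : forall x, x \in t -> x.1 != v.1.
    move=> [i a] xt; apply/eqP => /= ei; move: Qt => /andP [_ /allP /(_ _ xt)].
    have := nocl v.1 v.2 a; rewrite -surjective_pairing -ei => ->; done.
  have r1 : 0 < r - 1 by lia.
  have sL : size t <= r - 1 by rewrite st.
  have HA := common_bound r1 sL (degL v.1 t HL).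
  move: HA; rewrite st => HA.
  pose A := [set b | all (fun x => eG x (v.1, b)) t].
  have mA : m.+1 <= #|A|.
    rewrite -(leq_pmul2r K0); rewrite mulSn; move: HA; rewrite -/A mulnC => HA.
    have : K <= n by lia.
    nia.
  apply: leq_trans (_ : #|A :\ v.2| <= _).
    have := cardsD1 v.2 A; have := leq_b1 (v.2 \in A); move: (nat_of_bool _) => z; lia.
  rewrite -(card_pair_img v.1); apply: subset_leq_card.
  apply/subsetP => y /imsetP [b bA ->]; move: bA; rewrite !inE; case/andP => bv Hb.
  rewrite /E /=; move: Qt => /andP [-> ->]; rewrite !andbT.
  apply/andP; split.
    by apply/eqP => ev; move: bv; rewrite -ev /= eqxx.
  by apply/allP => x xs; rewrite sym; move/allP: Hb; apply.
have cardE : m ^ r <= #|[set u : r.-tuple V | E u]|.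
  have er : r = (r - 1).+1 by lia.
  rewrite (card_tuple_eq E er) card_cons.
  have cQ : m ^ (r - 1) <= #|[set u : (r - 1).-tuple V | Q u]|.
    by apply: count_nested => //; move=> s Qs ss; apply: extQ.
  have -> : m ^ r = m ^ (r - 1) * m by rewrite -expnSr -er.
  apply: leq_trans (_ : #|[set u : (r - 1).-tuple V | Q u]| * m <= _).
    by rewrite leq_mul2r cQ orbT.
  rewrite -sum1_card big_distrl /= big_mkcond /=; apply: leq_sum => t _.
  rewrite inE; case Qt: (Q t); rewrite ?mul0n // mul1n.
  by apply: extE => //; rewrite size_tuple.
have HE : #|{: V}| ^ r <= #|[set u : r.-tuple V | E u]| * D.
  rewrite cardV; apply: leq_trans (_ : (m * (2 * K * r)) ^ r <= _).
    rewrite leq_exp2r; last by lia.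
    by move: nm; nia.
  by rewrite expnMn leq_mul2r cardE orbT.
have [Ss [szS allS box]] := HN0 V ltac:(rewrite cardV; nia) E HE.
pose S i := nth set0 Ss i.
have hp : 0 < h by apply/card_gt0P; exists x0.
have hS : forall i, i < r -> h <= #|S i|.
  by move=> i ir; move/(all_nthP set0): allS; apply; rewrite szS.
pose pk i := nth v (enum (S i)) 0.
have pk_in : forall i, i < r -> pk i \in S i.
  move=> i ir; rewrite -mem_enum; apply: mem_nth; rewrite -fintype.cardE.
  by apply: leq_trans hp (hS i ir).
pose mk p q z w := mkseq (fun i => if i == p then z else if i == q then w else pk i) r.
have mkE : forall p q z w, p < r -> q < r -> z \in S p -> (p != q -> w \in S q) ->
    E (mk p q z w).
  move=> p q z w pr qr zS wS; apply: box; apply: (@all2_nth _ _ _ v set0).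
    by rewrite size_mkseq szS.
  move=> i; rewrite size_mkseq => ir; rewrite nth_mkseq //.
  case: eqP => [->//|ip]; case: eqP => [iq|iq]; last exact: pk_in.
  by subst i; apply: wS; apply/eqP => pq; apply: ip; rewrite pq.
have F1 : forall p q z w, p < r -> q < r -> p != q -> z \in S p -> w \in S q ->
    eG z w.
  move=> p q z w pr qr pq zS wS.
  have /and3P [_ /(pairwiseP v) pw _] := mkE p q z w pr qr zS (fun _ => wS).
  have np : nth v (mk p q z w) p = z by rewrite nth_mkseq // eqxx.
  have nq : nth v (mk p q z w) q = w by rewrite nth_mkseq // (eq_sym q p) (negbTE pq) eqxx.
  case: (ltngtP p q) => [lpq|lqp|epq]; last by move: pq; rewrite epq eqxx.
    by have := pw p q; rewrite np nq; apply; rewrite ?inE /= ?size_mkseq.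
  by have := pw q p; rewrite np nq sym; apply; rewrite ?inE /= ?size_mkseq.
have F2 : forall q w, 0 < q < r -> w \in S q -> eG v w.
  move=> q w /andP [q0 qr] wS.
  have /and3P [_ _ /(all_nthP v) al] := mkE q q w w qr qr wS (fun _ => wS).
  have := al q.-1; rewrite nth_behead prednK // nth_mkseq // eqxx; apply.
  by rewrite size_behead size_mkseq; lia.
have r0 : 0 < r by lia.
have F3 : v \notin S 0.
  apply/negP => vS.
  have /and3P [hv _ _] := mkE 0 0 v v r0 r0 vS (fun _ => vS).
  by move: hv; rewrite -nth0 nth_mkseq // !eqxx.
pose z0 : 'I_r := Ordinal r0.
pose pr : {perm 'I_r} := tperm (c x0) z0.
pose pos x := val (pr (c x)).
have pos0 : pos x0 = 0 by rewrite /pos tpermL.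
have posr : forall x, pos x < r by move=> x; exact: ltn_ord.
have posE : forall x y, pos x = pos y -> c x = c y.
  by move=> x y /val_inj /perm_inj.
pose g x := nth v (enum (S (pos x))) (enum_rank x).
have szE : forall x, (enum_rank x : nat) < size (enum (S (pos x))).
  by move=> x; rewrite -fintype.cardE; apply: leq_trans (ltn_ord _) (hS _ (posr x)).
have g_in : forall x, g x \in S (pos x).
  by move=> x; rewrite -mem_enum; apply: mem_nth.
have g_inj : forall x y, pos x = pos y -> g x = g y -> x = y.
  move=> x y pxy gxy; apply: enum_rank_inj; apply: val_inj => /=.
  apply/eqP; move: gxy => /eqP; rewrite /g -pxy nth_uniq ?enum_uniq //.
  by rewrite pxy.
pose f x := if x == x0 then v else g x.
have vg : forall y, v != g y.
  move=> y; apply/eqP => vy; have := g_in y; rewrite -vy.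
  case: (posnP (pos y)) => [->|py]; first by rewrite (negbTE F3).
  have qq : 0 < pos y < r by rewrite py posr.
  by move=> /(F2 _ _ qq); rewrite irr.
exists f; split; last split; last by exists x0; rewrite /f eqxx.
  move=> x y; rewrite /f.
  case: (eqVneq x x0) => [->|xn]; case: (eqVneq y x0) => [->|yn] //.
  - by move=> /eqP; rewrite (negbTE (vg y)).
  - by move=> /esym /eqP; rewrite (negbTE (vg x)).
  case: (eqVneq (pos x) (pos y)) => [pxy|pxy]; first exact: g_inj.
  move=> gxy; have := F1 _ _ _ _ (posr x) (posr y) pxy (g_in x) (g_in y).
  by rewrite gxy irr.
move=> x y exy.
have cxy : c x != c y by apply: cP.
have pxy : pos x != pos y by apply: contra cxy => /eqP /posE ->.
rewrite /f; case: (eqVneq x x0) => [ex|xn]; case: (eqVneq y x0) => [ey|yn].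
- by move: cxy; rewrite ex ey eqxx.
- apply: (F2 (pos y)); last exact: g_in.
  by rewrite posr andbT lt0n -pos0 -ex eq_sym.
- rewrite sym; apply: (F2 (pos x)); last exact: g_in.
  by rewrite posr andbT lt0n -pos0 -ey.
- exact: F1 (posr x) (posr y) pxy (g_in x) (g_in y).
Qed.

From Stdlib Require Import Reals.
From Stdlib Require Import Lra.

Lemma real_bound (r n K deg : nat) (alpha : R) : 3 <= r -> deg <= n -> 0 < K ->
  (1 <= alpha * INR K)%R ->
  (INR deg >= INR (r - 2) / INR (r - 1) * INR n + alpha * INR n)%R ->
  K * (r - 1) * (n - deg) + (r - 1) * n <= K * n.
Proof.
move=> r3 dn K0 HK Hd.
have q1 : INR (r - 2) = (INR (r - 1) - 1)%R.
  rewrite (_ : r - 1 = (r - 2).+1); last by lia.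
  by rewrite S_INR; lra.
have qp : (1 < INR (r - 1))%R.
  rewrite (_ : r - 1 = (r - 2).+1); last by lia.
  rewrite S_INR; have := pos_INR (r - 2); rewrite (_ : r - 2 = (r - 3).+1); last by lia.
  rewrite S_INR; have := pos_INR (r - 3); lra.
apply/leP; apply: INR_le.
rewrite -!multE -!plusE -!minusE !plus_INR !mult_INR (minus_INR n deg); last by apply/leP.
move: Hd qp HK; rewrite q1.
set q := INR (r - 1); set N := INR n; set d := INR deg; set k := INR K.
move=> Hd qp HK.
have Np : (0 <= N)%R by apply: pos_INR.
have kp : (0 <= k)%R by apply: pos_INR.
have h1 : (q * d >= (q - 1) * N + alpha * q * N)%R.
  apply: Rle_ge.
  have qn : q <> 0%R by apply: Rgt_not_eq; lra.
  have -> : ((q - 1) * N + alpha * q * N)%R = (q * ((q - 1) / q * N + alpha * N))%R by field.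
  apply: Rmult_le_compat_l; lra.
have h2 := Rmult_le_compat_l k _ _ kp (Rge_le _ _ h1).
have h3 : (q * N <= alpha * k * (q * N))%R.
  have qN : (0 <= q * N)%R by nra.
  nra.
nra.
Qed.

Theorem proposition2p6 (T : finType) (e : rel T) (r : nat) :
  simple_graph e -> chromatic_number_is e r -> 3 <= r -> gcd_is_one e r ->
  forall alpha : R, (0 < alpha)%R ->
  exists n0 : nat, forall (n : nat) (eG : rel ('I_r * 'I_n)),
    n0 <= n -> balanced_rpartite eG ->
    (forall (i j : 'I_r) (a : 'I_n), i != j ->
       (INR #|[set b : 'I_n | eG (i, a) (j, b)]| >=
          INR (r - 2) / INR (r - 1) * INR n + alpha * INR n)%R) ->
    forall v : 'I_r * 'I_n, copy_containing e eG v.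
Proof.
move=> _ [col ncol] r3 _ alpha ha.
have [x0 _ | T0] := pickP (@predT T); last first.
  exfalso; apply: ncol.
  have rp : 0 < r.-1 by lia.
  exists (fun _ => Ordinal rp) => x y _; have := T0 x; done.
have [K HK] := INR_unbounded (/ alpha).
have aK : (1 <= alpha * INR K)%R.
  have := Rmult_lt_compat_l alpha _ _ ha HK.
  rewrite Rinv_r; [lra | apply: Rgt_not_eq; lra].
have K0 : 0 < K.
  case: (posnP K) => // K0; exfalso; move: HK; rewrite K0 /=.
  have := Rinv_0_lt_compat alpha ha; lra.
have [n0 Hn0] := main_comb x0 col r3 K0.
exists n0 => n eG Hn bal Hdeg v; apply: Hn0 => // i j a ij.
have := Hdeg i j a ij.
have hc : #|[set b | ~~ eG (i, a) (j, b)]| = n - #|[set b | eG (i, a) (j, b)]|.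
  have h1 := cardsC [set b | eG (i, a) (j, b)].
  have h2 : #|[set b | ~~ eG (i, a) (j, b)]| = #|~: [set b | eG (i, a) (j, b)]|.
    by apply: eq_card => b; rewrite !inE.
  have h3 : #|[set b | ~~ eG (i, a) (j, b)]| + #|[set b | eG (i, a) (j, b)]| = n.
    by rewrite h2 addnC h1 card_ord.
  move: h3; move: #|[set b | ~~ _]| #|[set b | eG _ _]| => x y; lia.
rewrite hc; apply: real_bound => //.
by rewrite -[X in _ <= X](card_ord n) max_card.
Qed.
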